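(* Let $p\in(0,1/2]$, $b=\lfloor 1/p\rfloor$ (so $b\ge2$), and $m\ge1$ an integer. Let $D_U,D_V$ be integers with $m\le D_U\le bm$, $0\le D_V\le bm$, such that $D_U-m$ is an integer multiple of $b-1$ and $D_V$ is an integer multiple of $b$. Consider $$\Phi(x,y)=\sum_{i=1}^m\bigl(1-e^{-p\,y_i}\bigr)\cdot\max\{x_i-1,0\}$$ over integer vectors $x,y\in\{0,1,\dots,b\}^m$ with $\sum_i x_i=D_U$ and $\sum_i y_i=D_V$. Then $\Phi$ has a minimizer $(x^\star,y^\star)$ over this set in which every $x^\star_i\in\{1,b\}$ and every $y^\star_i\in\{0,b\}$. *)

(* Defs.v *)
From Stdlib Require Import Reals Lra Lia Arith.
Open Scope R_scope.

(* Vectors in {0..b}^m are represented as functions nat -> nat;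
   only the indices 0 .. m-1 are relevant (coordinate i+1 of the paper = index i). *)

Fixpoint rsum (n : nat) (f : nat -> R) : R :=
  match n with
  | O => 0
  | S k => rsum k f + f k
  end.

Fixpoint nsum (n : nat) (f : nat -> nat) : nat :=
  match n with
  | O => 0%nat
  | S k => (nsum k f + f k)%nat
  end.

Definition Phi (p : R) (m : nat) (x y : nat -> nat) : R :=
  rsum m (fun i => (1 - exp (- (p * INR (y i)))) * Rmax (INR (x i) - 1) 0).

Definition feasible (b m DU DV : nat) (x y : nat -> nat) : Prop :=
  (forall i, (i < m)%nat -> (x i <= b)%nat /\ (y i <= b)%nat) /\
  nsum m x = DU /\ nsum m y = DV.

(* Main.v *)
Require Import Defs.
From Stdlib Require Import Reals Arith Lra Lia Psatz.
Open Scope R_scope.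

Lemma Rdiv_le_0_compat a b : 0 <= a -> 0 < b -> 0 <= a / b.
Proof. intros. unfold Rdiv. apply Rmult_le_pos; auto. left; apply Rinv_0_lt_compat; auto. Qed.

Lemma exp_chord s S0 : 0 <= s -> s <= S0 -> 0 < S0 ->
  exp (- s) <= (1 - s / S0) + (s / S0) * exp (- S0).
Proof.
  intros h0 h1 h2.
  set (t := s / S0).
  assert (ht : t * S0 = s) by (unfold t; field; lra).
  assert (ht0 : 0 <= t) by (unfold t; apply Rdiv_le_0_compat; lra).
  assert (ht1 : t <= 1).
  { unfold t. apply (Rmult_le_reg_r S0); auto. field_simplify; lra. }
  assert (eS : exp (- S0) = exp (s - S0) * exp (- s)).
  { rewrite <- exp_plus. f_equal. ring. }
  assert (eA : exp s * exp (- s) = 1).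
  { rewrite <- exp_plus. replace (s + - s) with 0 by ring. apply exp_0. }
  pose proof (exp_ineq1_le s) as A.
  pose proof (exp_ineq1_le (s - S0)) as B.
  pose proof (exp_pos (- s)) as E.
  rewrite eS.
  assert (H : 1 <= (1 - t) * exp s + t * exp (s - S0)) by nra.
  nra.
Qed.

Lemma rsum_le n f g : (forall i, (i < n)%nat -> f i <= g i) -> rsum n f <= rsum n g.
Proof. induction n; simpl; intros H; [lra|]. pose proof (H n ltac:(lia)).
  assert (rsum n f <= rsum n g) by (apply IHn; intros; apply H; lia). lra. Qed.

Lemma rsum_ext n f g : (forall i, (i < n)%nat -> f i = g i) -> rsum n f = rsum n g.
Proof. induction n; simpl; intros H; [lra|]. rewrite (H n ltac:(lia)), IHn; auto. Qed.

Lemma rsum_lin n (a c d : R) (x y : nat -> nat) :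
  rsum n (fun i => a * INR (x i) + c * INR (y i) + d) =
  a * INR (nsum n x) + c * INR (nsum n y) + d * INR n.
Proof. induction n; cbn [rsum nsum]; [simpl; lra|]. rewrite IHn, !plus_INR, S_INR. ring. Qed.

Lemma rsum_0 n : rsum n (fun _ => 0) = 0.
Proof. induction n; simpl; lra. Qed.

Lemma nsum_xs n k b' : nsum n (fun i => if (i <? k)%nat then S b' else 1%nat) = (n + Nat.min n k * b')%nat.
Proof. induction n; cbn [nsum]; auto. rewrite IHn.
  destruct (Nat.ltb_spec n k).
  - rewrite (Nat.min_l n k), (Nat.min_l (S n) k) by lia. lia.
  - rewrite (Nat.min_r n k), (Nat.min_r (S n) k) by lia. lia. Qed.

Lemma nsum_ys n j b : nsum n (fun i => if (i <? j)%nat then 0%nat else b) = ((n - j) * b)%nat.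
Proof. induction n; cbn [nsum]; auto. rewrite IHn.
  destruct (Nat.ltb_spec n j).
  - replace (S n - j)%nat with 0%nat by lia. replace (n - j)%nat with 0%nat by lia. lia.
  - replace (S n - j)%nat with (S (n - j)) by lia. simpl. lia. Qed.


Lemma term_lb p b' x y : 0 < p -> (x <= S b')%nat -> (y <= S b')%nat -> (1 <= b')%nat ->
  let fb := 1 - exp (- (p * INR (S b'))) in
  let c := fb * INR b' in
  c / INR b' * INR x + c / INR (S b') * INR y + (- c / INR b' - c) <=
  (1 - exp (- (p * INR y))) * Rmax (INR x - 1) 0.
Proof.
  intros hp hx hy hb' fb c.
  assert (Hb' : 1 <= INR b') by (apply (le_INR 1); lia).
  assert (HB : INR (S b') = INR b' + 1) by (rewrite S_INR; lra).
  assert (hxr : INR x <= INR b' + 1) by (rewrite <- HB; apply le_INR; lia).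
  assert (hyr : INR y <= INR b' + 1) by (rewrite <- HB; apply le_INR; lia).
  assert (hy0 : 0 <= INR y) by apply pos_INR.
  assert (hfb : 0 <= fb).
  { unfold fb. assert (exp (- (p * INR (S b'))) <= 1); [|lra].
    rewrite <- exp_0. apply Rlt_le, exp_increasing. rewrite HB. nra. }
  set (v := INR y / INR (S b')).
  assert (hv : v * (INR b' + 1) = INR y) by (unfold v; rewrite HB; field; lra).
  assert (hv0 : 0 <= v) by (unfold v; apply Rdiv_le_0_compat; lra).
  assert (hv1 : v <= 1) by nra.
  assert (hf : fb * v <= 1 - exp (- (p * INR y))).
  { pose proof (exp_chord (p * INR y) (p * INR (S b'))) as C.
    replace (p * INR y / (p * INR (S b'))) with v in C by (unfold v; rewrite HB; field; split; nra).
    assert (exp (- (p * INR y)) <= 1 - v + v * exp (- (p * INR (S b')))); [|unfold fb; nra].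
    apply C; rewrite ?HB; nra. }
  replace (c / INR (S b') * INR y) with (c * v) by (unfold v; field; lra).
  assert (hc : 0 <= c) by (unfold c; nra).
  destruct x as [|x].
  - simpl. rewrite Rmax_right by lra.
    replace (c / INR b' * 0) with 0 by ring.
    assert (0 <= c / INR b') by (apply Rdiv_le_0_compat; lra).
    assert ((1 - exp (- (p * INR y))) >= 0) by nra. nra.
  - rewrite S_INR in *. rewrite Rmax_left by (pose proof (pos_INR x); lra).
    replace (INR x + 1 - 1) with (INR x) by ring.
    set (u := INR x / INR b').
    assert (hu : u * INR b' = INR x) by (unfold u; field; lra).
    assert (hu0 : 0 <= u) by (unfold u; apply Rdiv_le_0_compat; [apply pos_INR|lra]).
    assert (hu1 : u <= 1) by nra.
    replace (c / INR b' * (INR x + 1) + c * v + (- c / INR b' - c)) with (c * (u + v - 1))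
      by (unfold u; field; lra).
    assert (fb * v * INR x <= (1 - exp (- (p * INR y))) * INR x) by (apply Rmult_le_compat_r; [apply pos_INR|lra]).
    assert (c * (u + v - 1) <= c * (u * v)) by (apply Rmult_le_compat_l; nra).
    unfold c in *. nra.
Qed.

Theorem mainTheorem9 (p : R) (b m DU DV : nat)
  (hp0 : 0 < p) (hp1 : p <= 1 / 2)
  (hb : INR b <= / p < INR b + 1)          (* b = floor (1/p) *)
  (hm : (1 <= m)%nat)
  (hDU : (m <= DU <= b * m)%nat)
  (hDV : (DV <= b * m)%nat)
  (hDUdiv : Nat.divide (b - 1) (DU - m))
  (hDVdiv : Nat.divide b DV) :
  exists xs ys : nat -> nat,
    feasible b m DU DV xs ys /\
    (forall i, (i < m)%nat -> (xs i = 1%nat \/ xs i = b) /\ (ys i = 0%nat \/ ys i = b)) /\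
    (forall x y : nat -> nat, feasible b m DU DV x y -> Phi p m xs ys <= Phi p m x y).
Proof.
  assert (hb2 : (2 <= b)%nat).
  { assert (/ p >= 2).
    { replace 2 with (/ (1/2)) by field. apply Rle_ge, Rinv_le_contravar; lra. }
    assert (2 < INR b + 1) by lra.
    destruct b as [|[|b]]; simpl in *; lra || lia. }
  destruct b as [|b']; [lia|].
  replace (S b' - 1)%nat with b' in hDUdiv by lia.
  destruct hDUdiv as [k hk]. destruct hDVdiv as [l hl].
  assert (hkm : (k <= m)%nat) by nia.
  assert (hlm : (l <= m)%nat) by nia.
  exists (fun i => if (i <? k)%nat then S b' else 1%nat).
  exists (fun i => if (i <? m - l)%nat then 0%nat else S b').
  assert (Hb' : 1 <= INR b') by (apply (le_INR 1); lia).
  assert (HB : INR (S b') = INR b' + 1) by (rewrite S_INR; lra).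
  assert (hxs : nsum m (fun i => if (i <? k)%nat then S b' else 1%nat) = DU).
  { rewrite nsum_xs. rewrite Nat.min_r by lia. lia. }
  assert (hys : nsum m (fun i => if (i <? m - l)%nat then 0%nat else S b') = DV).
  { rewrite nsum_ys. replace (m - (m - l))%nat with l by lia. lia. }
  assert (hfeas : feasible (S b') m DU DV (fun i => if (i <? k)%nat then S b' else 1%nat)
                    (fun i => if (i <? m - l)%nat then 0%nat else S b')).
  { split; [|split; auto]. intros i _.
    destruct (Nat.ltb_spec i k), (Nat.ltb_spec i (m - l)); lia. }
  split; [exact hfeas|]. split.
  { intros i _. destruct (Nat.ltb_spec i k), (Nat.ltb_spec i (m - l)); auto. }
  intros x y Hf.
  set (fb := 1 - exp (- (p * INR (S b')))).
  set (c := fb * INR b').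
  set (lin := fun (x y : nat -> nat) (i : nat) =>
        c / INR b' * INR (x i) + c / INR (S b') * INR (y i) + (- c / INR b' - c)).
  assert (Hlin : forall x y, feasible (S b') m DU DV x y ->
     rsum m (lin x y) = c / INR b' * INR DU + c / INR (S b') * INR DV + (- c / INR b' - c) * INR m).
  { intros x0 y0 [_ [H1 H2]]. unfold lin. rewrite rsum_lin, H1, H2. reflexivity. }
  assert (Hlow : rsum m (lin x y) <= Phi p m x y).
  { unfold Phi. apply rsum_le. intros i hi. destruct Hf as [Hf _].
    destruct (Hf i hi). pose proof (term_lb p b' (x i) (y i) hp0 ltac:(lia) ltac:(lia) ltac:(lia)) as T.
    cbv zeta in T. unfold lin, c, fb. exact T. }
  assert (Hpos : 0 <= Phi p m x y).
  { rewrite <- (rsum_0 m). unfold Phi. apply rsum_le. intros i hi.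
    apply Rmult_le_pos.
    - assert (exp (- (p * INR (y i))) <= 1); [|lra].
      rewrite <- exp_0. destruct (Rle_lt_or_eq_dec 0 (INR (y i))) as [h|h]. apply pos_INR.
      + apply Rlt_le, exp_increasing. nra.
      + rewrite <- h. right. f_equal. ring.
    - apply Rmax_r. }
  assert (e0 : 1 - exp (- (p * INR 0)) = 0).
  { simpl. replace (- (p * 0)) with 0 by ring. rewrite exp_0. ring. }
  assert (e1 : Rmax (INR 1 - 1) 0 = 0).
  { simpl. rewrite Rmax_right; lra. }
  destruct (le_lt_dec (k + l) m) as [Hkl|Hkl].
  - assert (Phi p m (fun i => if (i <? k)%nat then S b' else 1%nat)
            (fun i => if (i <? m - l)%nat then 0%nat else S b') = 0).
    { rewrite <- (rsum_0 m). unfold Phi. apply rsum_ext. intros i hi.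
      destruct (Nat.ltb_spec i k), (Nat.ltb_spec i (m - l)).
      - rewrite e0. ring.
      - lia.
      - rewrite e0. ring.
      - rewrite e1. ring. }
    lra.
  - assert (Phi p m (fun i => if (i <? k)%nat then S b' else 1%nat)
            (fun i => if (i <? m - l)%nat then 0%nat else S b') =
            rsum m (lin (fun i => if (i <? k)%nat then S b' else 1%nat)
            (fun i => if (i <? m - l)%nat then 0%nat else S b'))).
    { unfold Phi. apply rsum_ext. intros i hi. unfold lin.
      destruct (Nat.ltb_spec i k), (Nat.ltb_spec i (m - l)).
      - rewrite e0. rewrite HB. simpl (INR 0). field. lra.
      - rewrite HB. rewrite Rmax_left by lra. unfold c, fb. rewrite HB. field. lra.
      - lia.
      - rewrite e1. simpl (INR 1). rewrite HB. field. lra. }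
    rewrite H, Hlin by exact hfeas. rewrite <- (Hlin x y Hf). exact Hlow.
Qed.
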